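(* Let $q$ be a prime power, $v\ge2$, and let $u\in\mathbb{Z}$, $m\ge0$ and $\Delta\ge1$ be integers. Let $\mathcal{C}$ be a set of points of $\mathrm{PG}(v-1,q)$ with $|\mathcal{C}\cap H|\equiv u\pmod{\Delta}$ for every hyperplane $H$ and with cardinality $n=u+m\Delta\ge0$. Then $$(q-1)\cdot\sum_{h\in\mathbb{Z},\,h\le m}h(h-1)\,a_{u+h\Delta}=\tau_q(u,\Delta,m)\cdot\frac{q^{v-2}}{\Delta^2}-m(m-1),$$ where $$\tau_q(u,\Delta,m)=m(m-q)\Delta^2+\left(q^2u-2mqu+mq+2mu-qu-m\right)\Delta+(q-1)^2u^2+(q-1)u,$$ $a_i$ denotes the number of hyperplanes $H$ with $|\mathcal{C}\cap H|=i$, and $a_{u+h\Delta}:=0$ whenever $u+h\Delta<0$.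
   Context: $\mathrm{PG}(v-1,q)$ is the set of $1$-dimensional subspaces (points) of $\mathbb{F}_q^v$; hyperplanes are the $(v-1)$-dimensional subspaces of $\mathbb{F}_q^v$, and $\mathcal{C}\cap H$ is the set of points of $\mathcal{C}$ contained in $H$. *)

(* Defs.v *)
From HB Require Import structures.
From mathcomp Require Import all_boot all_order all_algebra all_field.
Set Implicit Arguments. Unset Strict Implicit. Unset Printing Implicit Defensive.
Import GRing.Theory Num.Theory.
Import VectorInternalTheory.
Local Open Scope ring_scope.

HB.instance Definition _ (F : finFieldType) (n : nat) :=
  [Countable of {vspace 'rV[F]_n} by <:].
HB.instance Definition _ (F : finFieldType) (n : nat) :=
  [Finite of {vspace 'rV[F]_n} by <:].

(* PG(v-1,q) over F with #|F| = q : points are the 1-dimensional subspaces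
   of F^v, hyperplanes the (v-1)-dimensional subspaces. *)
Definition PG_point (F : finFieldType) (v : nat) (P : {vspace 'rV[F]_v}) : bool :=
  \dim P == 1%N.
Definition PG_hyperplane (F : finFieldType) (v : nat) (H : {vspace 'rV[F]_v}) : bool :=
  \dim H == v.-1.

Definition meet_hyp (F : finFieldType) (v : nat)
  (C : {set {vspace 'rV[F]_v}}) (H : {vspace 'rV[F]_v}) : {set {vspace 'rV[F]_v}} :=
  [set P in C | (P <= H)%VS].

Definition spectrum (F : finFieldType) (v : nat)
  (C : {set {vspace 'rV[F]_v}}) (i : int) : nat :=
  #|[set H : {vspace 'rV[F]_v} | PG_hyperplane H & (#|meet_hyp C H|%:Z == i)]|.

Definition tau_q (q : nat) (u Delta m : int) : int :=
  m * (m - q%:Z) * Delta ^+ 2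
  + ((q%:Z) ^+ 2 * u - 2 * m * q%:Z * u + m * q%:Z + 2 * m * u - q%:Z * u - m) * Delta
  + (q%:Z - 1) ^+ 2 * u ^+ 2 + (q%:Z - 1) * u.

(* Main.v *)
Require Import Defs.
From HB Require Import structures.
From mathcomp Require Import all_boot all_order all_algebra all_field.
From mathcomp Require Import ring lra zify.
Import GRing.Theory Num.Theory.
Local Open Scope ring_scope.

Section Ann.
Variable F : finFieldType.
Variable v : nat.
Local Notation V := ('rV[F]_v).

Definition kerv (y : V) : {vspace V} := lker (linfun (mulmxr y^T : V -> 'M[F]_1)).

Lemma mem_kerv y x : (x \in kerv y) = (x *m y^T == 0).
Proof. by rewrite memv_ker lfunE. Qed.

Lemma card_rowspace m (K : 'M[F]_(m, v)) :
  #|[set y : V | (y <= K)%MS]| = (#|F| ^ \rank K)%N.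
Proof.
have -> : [set y : V | (y <= K)%MS] = [set w *m row_base K | w : 'rV_(\rank K)].
  apply/setP => y; rewrite inE; apply/idP/imsetP.
    rewrite -(eq_row_base K) => /submxP[w ->]; by exists w.
  by case=> w _ ->; rewrite -(eq_row_base K) submxMl.
rewrite card_imset; last exact: row_free_inj (row_base_free K).
by rewrite card_mx mul1n.
Qed.

Lemma card_ann (U : {vspace V}) :
  #|[set y : V | (U <= kerv y)%VS]| = (#|F| ^ (v - \dim U))%N.
Proof.
set d := \dim U.
pose X : 'M[F]_(d, v) := \matrix_(i < d) (vbasis U)`_i.
have Xfree : row_free X.
  rewrite -kermx_eq0; apply/rowV0P => w /sub_kermxP wX0.
  move/freeP: (basis_free (vbasisP U)) => /(_ (fun i => w 0 i)) H.
  apply/rowP => i; rewrite mxE; apply: H.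
  transitivity (w *m X); last exact: wX0.
  by rewrite mulmx_sum_row; apply: eq_bigr => j _; rewrite rowK.
have -> : [set y : V | (U <= kerv y)%VS] = [set y : V | (y <= kermx X^T)%MS].
  apply/setP => y; rewrite !inE; apply/idP/idP.
    move=> Uy; apply/sub_kermxP; apply: trmx_inj; rewrite trmx_mul trmxK trmx0.
    apply/row_matrixP => i; rewrite row_mul rowK row0.
    apply/eqP; rewrite -mem_kerv; apply: (subvP Uy).
    by apply: vbasis_mem; apply: mem_nth; rewrite size_tuple.
  move/sub_kermxP => yX.
  have XyT : X *m y^T = 0 by rewrite -(trmxK X) -trmx_mul yX trmx0.
  rewrite -(span_basis (vbasisP U)); apply/span_subvP => x /(nthP 0)[i ltid <-].
  rewrite mem_kerv; move: ltid; rewrite size_tuple => ltid.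
  have := congr1 (row (Ordinal ltid)) XyT.
  by rewrite row_mul rowK row0 => ->.
rewrite card_rowspace mxrank_ker mxrank_tr.
by move/eqP: Xfree => ->.
Qed.


Lemma kerv0 U : (U <= kerv 0)%VS.
Proof. by apply/subvP => x _; rewrite mem_kerv trmx0 mulmx0. Qed.

Lemma kerv_sym x y : (x \in kerv y) = (y \in kerv x).
Proof.
rewrite !mem_kerv; apply/eqP/eqP => H.
  by rewrite -(trmxK y) -trmx_mul H trmx0.
by rewrite -(trmxK x) -trmx_mul H trmx0.
Qed.

Definition cnt (U : {vspace V}) := #|[set y : V | (y != 0) && (U <= kerv y)%VS]|.

Lemma cntE U : cnt U = (#|F| ^ (v - \dim U) - 1)%N.
Proof.
rewrite /cnt -card_ann (cardsD1 0 [set y : V | (U <= kerv y)%VS]) inE kerv0 add1n subn1 /=.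
by apply: eq_card => y; rewrite !inE.
Qed.

Lemma q_gt1 : (1 < #|F|)%N.
Proof. exact: finNzRing_gt1. Qed.

Lemma dim_kerv y : y != 0 -> \dim (kerv y) = v.-1.
Proof.
move=> y0.
have := card_ann <[y]>; rewrite dim_vline y0 subn1.
have -> : [set x : V | (<[y]> <= kerv x)%VS] = [set x in kerv y].
  by apply/setP => x; rewrite !inE -memvE kerv_sym.
rewrite cardsE card_vspace; exact: (expnI q_gt1).
Qed.

Lemma hyp_sum (g : {vspace V} -> rat) : (0 < v)%N ->
  (#|F|%:R - 1) * \sum_(H | PG_hyperplane H) g H = \sum_(y : V | y != 0) g (kerv y).
Proof.
move=> v0; rewrite (eq_bigr (fun y => \sum_(H | PG_hyperplane H && (H == kerv y)) g H)); last first.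
  move=> y y0; rewrite (big_pred1 (kerv y)) // => H /=.
  case: eqP => [->|]; last by rewrite andbF.
  by rewrite /PG_hyperplane dim_kerv // eqxx.
rewrite (exchange_big_dep (@PG_hyperplane F v)) /=; last by move=> y H _ /andP[].
rewrite mulr_sumr; apply: eq_bigr => H hH.
have -> : \sum_(y | (y != 0) && (PG_hyperplane H && (H == kerv y))) g H
        = \sum_(y in [set y : V | (y != 0) && (H <= kerv y)%VS]) g H.
  apply: eq_bigl => y; rewrite !inE hH /=.
  case y0: (y != 0) => //=.
  rewrite eqEdim dim_kerv //; move/eqP: hH => ->; by rewrite leqnn andbT.
rewrite sumr_const -/(cnt H) cntE; move/eqP: (hH) => ->.
have -> : (v - v.-1 = 1)%N by rewrite -subn1 subKn.
by rewrite expn1 -[g H *+ _]mulr_natr natrB ?(ltnW q_gt1) // mulrC.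
Qed.


Lemma sum_bool (T : finType) (p b : pred T) :
  \sum_(i | p i) ((b i : nat)%:R : rat) = #|[set i | p i && b i]|%:R.
Proof.
rewrite -sum1_card natr_sum (big_mkcond (fun i => i \in _)) [LHS]big_mkcond.
by apply: eq_bigr => i _; rewrite inE; case: (p i); case: (b i).
Qed.

Lemma card_meet (C : {set {vspace V}}) K :
  (#|meet_hyp C K|%:R : rat) = \sum_(P in C) ((((P <= K)%VS : bool) : nat)%:R).
Proof.
rewrite (sum_bool _ (fun P => P \in C)); congr (_%:R); apply: eq_card => P.
Qed.

Lemma dim_add_pts (P Q : {vspace V}) : \dim P = 1%N -> \dim Q = 1%N -> P != Q ->
  \dim (P + Q) = 2%N.
Proof.
move=> dP dQ PQ; have := dimv_sum_cap P Q; rewrite dP dQ.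
suff -> : \dim (P :&: Q) = 0%N by rewrite addn0.
have := dimvS (capvSl P Q); rewrite dP.
rewrite leq_eqVlt ltnS leqn0 => /orP[/eqP d1|/eqP //].
have e1 : (P :&: Q)%VS == P by rewrite eqEdim capvSl d1 dP.
have e2 : (P :&: Q)%VS == Q by rewrite eqEdim capvSr d1 dQ.
by move: PQ; rewrite -(eqP e1) -{2}(eqP e2) eqxx.
Qed.

Section WithC.
Variable C : {set {vspace V}}.
Hypothesis Cpts : forall P, P \in C -> PG_point P.

Lemma S1 : \sum_(y : V | y != 0) (#|meet_hyp C (kerv y)|%:R : rat)
   = #|C|%:R * (#|F| ^ (v - 1) - 1)%:R.
Proof.
under eq_bigr do rewrite card_meet.
rewrite exchange_big /=.
rewrite (eq_bigr (fun _ => (#|F| ^ (v - 1) - 1)%:R)); last first.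
  move=> P PC; rewrite sum_bool -/(cnt P) cntE.
  by move/eqP: (Cpts _ PC) => ->.
by rewrite sumr_const mulr_natl.
Qed.

Lemma S2 : \sum_(y : V | y != 0) (#|meet_hyp C (kerv y)|%:R : rat) ^+ 2
   = #|C|%:R * ((#|F| ^ (v - 1) - 1)%:R + (#|C|%:R - 1) * (#|F| ^ (v - 2) - 1)%:R).
Proof.
under eq_bigr do rewrite expr2 card_meet mulr_suml.
under eq_bigr => y _.
  under eq_bigr => P _ do rewrite mulr_sumr.
  over.
rewrite exchange_big /=.
under eq_bigr => P _ do rewrite exchange_big /=.
rewrite (eq_bigr (fun _ => ((#|F| ^ (v - 1) - 1)%:R + (#|C|%:R - 1) * (#|F| ^ (v - 2) - 1)%:R))); last first.
  move=> P PC.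
  rewrite (eq_bigr (fun Q => (cnt (P + Q))%:R)); last first.
    move=> Q _; rewrite /cnt -sum_bool; apply: eq_bigr => y _.
    by rewrite -natrM mulnb subv_add.
  rewrite (bigD1 P) //= addvv cntE; move/eqP: (Cpts _ PC) => ->.
  congr (_ + _).
  rewrite (eq_bigr (fun _ => (#|F| ^ (v - 2) - 1)%:R)); last first.
    move=> Q /andP[QC QP]; rewrite cntE dim_add_pts //.
      by apply/eqP; apply: Cpts.
    by apply/eqP; apply: Cpts.
    by rewrite eq_sym.
  rewrite (eq_bigl (fun Q => Q \in C :\ P)); last by move=> Q; rewrite !inE andbC.
  rewrite sumr_const.
  rewrite (cardsD1 P C) PC add1n /= -natr1 addrK.
  by rewrite mulr_natl.
by rewrite sumr_const mulr_natl.
Qed.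

End WithC.
End Ann.

Theorem lemma5p6 (F : finFieldType) (v : nat) (u m Delta : int)
  (C : {set {vspace 'rV[F]_v}}) :
  (2 <= v)%N -> 0 <= m -> 1 <= Delta ->
  (forall P, P \in C -> PG_point P) ->
  (forall H : {vspace 'rV[F]_v}, PG_hyperplane H ->
      (#|meet_hyp C H|%:Z == u %[mod Delta])%Z) ->
  #|C|%:Z = u + m * Delta ->
  ((#|F|%:R - 1) *
     \sum_(k < (absz m + absz u).+1)
        (let h : int := m - k%:Z in
         (h * (h - 1))%:~R * (spectrum C (u + h * Delta))%:R)
   : rat)
  = (tau_q #|F| u Delta m)%:~R * (#|F|%:R ^+ (v - 2)%N) / (Delta%:~R ^+ 2)
    - (m * (m - 1))%:~R.
Proof.
move=> v2 m0 D1 Cpts hmod hn.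
have D0 : (Delta%:~R : rat) != 0 by rewrite intr_eq0; apply/eqP => D0; rewrite D0 in D1.
pose f (x : nat) : rat :=
  ((x%:R - u%:~R) * (x%:R - u%:~R - Delta%:~R)) / Delta%:~R ^+ 2.
have step1 : \sum_(k < (absz m + absz u).+1)
        (let h : int := m - k%:Z in
         (h * (h - 1))%:~R * (spectrum C (u + h * Delta))%:R)
    = \sum_(H | PG_hyperplane H) f #|meet_hyp C H|.
  rewrite (eq_bigr (fun k : 'I_(absz m + absz u).+1 =>
      \sum_(H | PG_hyperplane H) ((m - (k : nat)%:Z) * (m - (k : nat)%:Z - 1))%:~R *
        (((#|meet_hyp C H|%:Z == u + (m - (k : nat)%:Z) * Delta) : bool) : nat)%:R)); last first.
    by move=> k _ /=; rewrite /spectrum -sum_bool mulr_sumr.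
  rewrite exchange_big /=; apply: eq_bigr => H hH.
  have := hmod H hH; rewrite eqz_mod_dvd => /dvdzP[h0 eh0].
  have cle : (#|meet_hyp C H| <= #|C|)%N.
    by apply: subset_leq_card; apply/subsetP => P; rewrite inE => /andP[].
  have cleZ : (#|meet_hyp C H|%:Z <= #|C|%:Z) by rewrite lez_nat.
  have c0 : (0 <= #|meet_hyp C H|%:Z) by [].
  rewrite hn in cleZ.
  have hb : 0 <= m - h0 /\ m - h0 <= m + `|u|.
    have := normr_ge0 u; have := ler_norm u; have := ler_normr u.
    nia.
  have k0lt : (absz (m - h0) < (absz m + absz u).+1)%N.
    case: hb => hb1 hb2; lia.
  rewrite (bigD1 (Ordinal k0lt)) //= big1 ?addr0.
    have e1 : (absz (m - h0))%:Z = m - h0 by lia.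
    rewrite e1 opprB addrC subrK.
    have -> : (#|meet_hyp C H|%:Z == u + h0 * Delta) by rewrite -eh0 addrC subrK.
    rewrite /f mulr1.
    have ec : (#|meet_hyp C H|%:R : rat) = u%:~R + h0%:~R * Delta%:~R.
      by rewrite -[_%:R]/((#|meet_hyp C H|%:Z)%:~R) -[X in X%:~R](subrK u) eh0 rmorphD rmorphM addrC.
    rewrite ec; field.
      exact: D0.
  move=> k /eqP kne.
  case: eqP; last by rewrite mulr0.
  move=> ek; exfalso; apply: kne; apply: val_inj => /=.
  have : (m - (k : nat)%:Z) * Delta = h0 * Delta.
    by apply: (addrI u); rewrite -ek -eh0 addrC subrK.
  have Dn0 : Delta != 0 by lia.
  move/mulIf => /(_ Dn0) => ekh.
  lia.
rewrite step1 hyp_sum; last by apply: leq_trans v2.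
have eqf : forall y : 'rV[F]_v, f #|meet_hyp C (kerv F v y)| =
   (#|meet_hyp C (kerv F v y)|%:R ^+ 2) * (Delta%:~R ^+ 2)^-1
   - ((2 * u%:~R + Delta%:~R) / Delta%:~R ^+ 2) * #|meet_hyp C (kerv F v y)|%:R
   + (u%:~R * (u%:~R + Delta%:~R) / Delta%:~R ^+ 2) * 1.
  by move=> y; rewrite /f; field.
rewrite (eq_bigr _ (fun y _ => eqf y)) big_split sumrB /= -mulr_suml -!mulr_sumr.
rewrite S1 // S2 //.
have S0 : \sum_(y : 'rV[F]_v | y != 0) (1 : rat) = (#|F| ^ v - 1)%:R.
  have := cntE F v 0; rewrite dimv0 subn0 /cnt => <-; rewrite -sum_bool.
  by apply: eq_bigr => y _; rewrite sub0v.
rewrite S0.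
have qp : (0 < #|F|)%N by apply: ltnW; apply: q_gt1.
rewrite !natrB ?expn_gt0 ?qp // !natrX.
have hnR : (#|C|%:R : rat) = u%:~R + m%:~R * Delta%:~R.
  by rewrite -[_%:R]/((#|C|%:Z)%:~R) hn rmorphD rmorphM.
rewrite hnR.
have ev : (#|F|%:R : rat) ^+ v = #|F|%:R ^+ 2 * #|F|%:R ^+ (v - 2).
  by rewrite -exprD; congr (_ ^+ _); lia.
have ev1 : (#|F|%:R : rat) ^+ (v - 1) = #|F|%:R * #|F|%:R ^+ (v - 2).
  by rewrite -exprS; congr (_ ^+ _); lia.
rewrite ev ev1 /tau_q.
set Q := (#|F|%:R ^+ (v - 2) : rat).
rewrite !(rmorphD, rmorphM, rmorphB, rmorphXn, rmorph1) /=.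
rewrite (_ : ((#|F| : int)%:~R : rat) = #|F|%:R) //.
field; exact: D0.
Qed.
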